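(* Let $0<x_1<x_2<x_3\le 1$. Then there is a unique $x'\in(x_1,x_3)$ with $$\frac{x'-x_1}{x'}+\ln\frac{x_3}{x'}=\frac{x_2-x_1}{x_2}+\frac{x_3-x_2}{x_3},$$ and this $x'$ satisfies $$T_h(x_1,x')+\mathcal H(x',x_3)\le T_h(x_1,x_2)+T_h(x_2,x_3).$$
   Context: For $a,b>0$ define $$T_h(a,b):=\tfrac12\Bigl(\tfrac1a-\tfrac1b+b-a\Bigr)\Bigl(a+\tfrac1b\Bigr),\qquad \mathcal H(a,b):=\ln\frac ba+\frac14\,(b^2-a^2)-\frac14\,(b^{-2}-a^{-2}),$$ with $\ln$ the natural logarithm. (In the paper this says that two consecutive ''steps'' between hyperbola points with abscissae $x_1<x_2<x_3\le1$ can be replaced by one step followed by one slide with the same area contribution and no larger crown.) *)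

(* Defs.v *)
From Stdlib Require Import Reals.
Open Scope R_scope.

Definition Th (a b : R) : R :=
  / 2 * (/ a - / b + b - a) * (a + / b).

Definition Hc (a b : R) : R :=
  ln (b / a) + / 4 * (b ^ 2 - a ^ 2) - / 4 * (/ (b ^ 2) - / (a ^ 2)).

(* Main.v *)
Require Import Defs.
From Stdlib Require Import Reals Lra.
From Coquelicot Require Import Coquelicot.
Open Scope R_scope.

Lemma ln_lt_xm1 (t : R) : 0 < t -> t <> 1 -> ln t < t - 1.
Proof.
  intros Ht Ht1.
  assert (H : 1 + ln t < exp (ln t)).
  { apply exp_ineq1. intro E. apply Ht1. rewrite <- (exp_ln t Ht), E. apply exp_0. }
  rewrite exp_ln in H; lra.
Qed.

Lemma ln_div' (x y : R) : 0 < x -> 0 < y -> ln (x / y) = ln x - ln y.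
Proof.
  intros. unfold Rdiv. rewrite ln_mult; try apply Rinv_0_lt_compat; auto.
  rewrite ln_Rinv; auto.
Qed.

Lemma f_dec (a c y z : R) : 0 < a -> a <= y -> y < z ->
  (z - a) / z + (ln c - ln z) < (y - a) / y + (ln c - ln y).
Proof.
  intros Ha Hy Hz.
  assert (Hl : ln (y / z) < y / z - 1).
  { apply ln_lt_xm1. apply Rdiv_lt_0_compat; lra.
    intro E. assert (y = z). { replace y with (y / z * z) by (field; lra). rewrite E; ring. } lra. }
  rewrite ln_div' in Hl by lra.
  assert (E1 : (y - a) / y - (z - a) / z + (1 - y / z) = (z - y) * (y - a) / (y * z))
    by (field; lra).
  assert (0 <= (z - y) * (y - a) / (y * z)).
  { apply Rle_mult_inv_pos. apply Rmult_le_pos; lra. apply Rmult_lt_0_compat; lra. }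
  lra.
Qed.

Lemma f_derive (a c u : R) : 0 < u ->
  is_derive (fun u => (u - a) / u + (ln c - ln u)) u ((a - u) / u ^ 2).
Proof.
  intros Hu. auto_derive. repeat split; lra. field. lra.
Qed.


Definition Psi (a c M u : R) : R :=
  2 * M * ((u - a) / u + (ln c - ln u)) - (2 * (a * u + / (a * u)) - (u ^ 2 + / u ^ 2)).

Lemma psi_derive (a c M u : R) : 0 < a -> 0 < u ->
  is_derive (Psi a c M) u (2 * (u - a) / u ^ 2 * (u ^ 2 + / (a * u) - M)).
Proof.
  intros Ha Hu. unfold Psi. auto_derive.
  - repeat split; try lra; apply Rgt_not_eq; apply Rmult_lt_0_compat; lra.
  - field. lra.
Qed.

Lemma cont_of_derive (f : R -> R) (df : R) (x : R) : is_derive f x df -> continuity_pt f x.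
Proof.
  intros H. apply is_derive_Reals in H.
  apply (derivable_continuous_pt f x (exist _ df H)).
Qed.

Lemma phi_le (a b c u : R) : 0 < a -> a < b -> b <= u -> u <= c -> c <= 1 ->
  u ^ 2 + / (a * u) <= b * c + / (a * b).
Proof.
  intros Ha Hab Hbu Huc Hc.
  assert (Hp : a * b * u * c <= 1).
  { assert (a * b <= 1) by nra. assert (u * c <= 1) by nra.
    assert (0 <= a * b) by nra. assert (0 <= u * c) by nra. nra. }
  assert (E : b * c + / (a * b) - (u ^ 2 + / (a * u)) =
              (b * c - u ^ 2) + (u - b) / (a * b * u)) by (field; lra).
  assert (H1 : b * c - u ^ 2 >= b * c - c * u) by nra.
  assert (H2 : (u - b) / (a * b * u) >= c * (u - b)).
  { apply Rle_ge. apply Rmult_le_reg_r with (r := a * b * u).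
    { assert (0 < a * b) by nra. nra. }
    replace ((u - b) / (a * b * u) * (a * b * u)) with (u - b) by (field; lra).
    assert (0 <= u - b) by lra. nra. }
  lra.
Qed.

Theorem mainTheorem3 (x1 x2 x3 : R) :
  0 < x1 -> x1 < x2 -> x2 < x3 -> x3 <= 1 ->
  exists x' : R,
    (x1 < x' < x3 /\
     (x' - x1) / x' + ln (x3 / x') = (x2 - x1) / x2 + (x3 - x2) / x3) /\
    (forall y : R, x1 < y < x3 ->
       (y - x1) / y + ln (x3 / y) = (x2 - x1) / x2 + (x3 - x2) / x3 ->
       y = x') /\
    Th x1 x' + Hc x' x3 <= Th x1 x2 + Th x2 x3.
Proof.
  intros H1 H12 H23 H3.
  set (C := (x2 - x1) / x2 + (x3 - x2) / x3).
  set (f := fun u => (u - x1) / u + (ln x3 - ln u)).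
  assert (Hl32 : ln x3 - ln x2 > (x3 - x2) / x3).
  { assert (H := ln_lt_xm1 (x2 / x3)). rewrite ln_div' in H by lra.
    assert (x2 / x3 - 1 = - ((x3 - x2) / x3)) by (field; lra).
    assert (x2 / x3 <> 1).
    { intro E. assert (x2 = x3). { replace x2 with (x2 / x3 * x3) by (field; lra). rewrite E; ring. } lra. }
    assert (0 < x2 / x3) by (apply Rdiv_lt_0_compat; lra).
    specialize (H ltac:(lra) ltac:(assumption)). lra. }
  assert (Hl21 : ln x2 - ln x1 > (x2 - x1) / x2).
  { assert (H := ln_lt_xm1 (x1 / x2)). rewrite ln_div' in H by lra.
    assert (x1 / x2 - 1 = - ((x2 - x1) / x2)) by (field; lra).
    assert (x1 / x2 <> 1).
    { intro E. assert (x1 = x2). { replace x1 with (x1 / x2 * x2) by (field; lra). rewrite E; ring. } lra. }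
    assert (0 < x1 / x2) by (apply Rdiv_lt_0_compat; lra).
    specialize (H ltac:(lra) ltac:(assumption)). lra. }
  assert (Hf1 : f x1 > C).
  { unfold f, C. replace ((x1 - x1) / x1) with 0 by (field; lra). lra. }
  assert (Hf3 : f x3 < C).
  { unfold f, C.
    assert (E : (x2 - x1) / x2 + (x3 - x2) / x3 - ((x3 - x1) / x3 + (ln x3 - ln x3))
               = (x2 - x1) * (x3 - x2) / (x2 * x3)) by (field; lra).
    assert (0 < (x2 - x1) * (x3 - x2) / (x2 * x3)).
    { apply Rdiv_lt_0_compat. nra. nra. }
    lra. }
  assert (Hf2 : f x2 > C).
  { unfold f, C. lra. }
  destruct (Ranalysis5.IVT_interv (fun u => C - f u) x1 x3) as [z [Hz Hfz]].
  { intros u Hu. eapply cont_of_derive. unfold f. auto_derive. repeat split; lra. reflexivity. }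
  { lra. }
  { lra. }
  { lra. }
  assert (Hz1 : x1 < z). { destruct (Req_dec z x1) as [E|E]; [subst z; lra | lra]. }
  assert (Hz3 : z < x3). { destruct (Req_dec z x3) as [E|E]; [subst z; lra | lra]. }
  assert (Hz2 : x2 < z).
  { destruct (Rle_or_lt z x2) as [Hle|Hlt]; [|lra].
    destruct (Req_dec z x2) as [E|E]; [subst z; lra|].
    assert (f x2 < f z) by (unfold f; apply f_dec; lra). lra. }
  assert (Hfzz : f z = C) by lra.
  exists z. split; [|split].
  - split; [lra|]. rewrite ln_div' by lra. exact Hfzz.
  - intros y Hy Hfy. rewrite ln_div' in Hfy by lra. change (f y = C) in Hfy.
    destruct (Rtotal_order y z) as [Hlt|[Heq|Hgt]]; auto.
    + assert (f z < f y) by (unfold f; apply f_dec; lra). lra.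
    + assert (f y < f z) by (unfold f; apply f_dec; lra). lra.
  - set (M := x2 * x3 + / (x1 * x2)).
    destruct (MVT_gen (Psi x1 x3 M) z x3 (fun u => 2 * (u - x1) / u ^ 2 * (u ^ 2 + / (x1 * u) - M)))
      as [xi [Hxi Hmvt]].
    { intros u Hu. rewrite Rmin_left in Hu by lra. rewrite Rmax_right in Hu by lra.
      apply psi_derive; lra. }
    { intros u Hu. rewrite Rmin_left in Hu by lra. rewrite Rmax_right in Hu by lra.
      eapply cont_of_derive. apply psi_derive; lra. }
    rewrite Rmin_left in Hxi by lra. rewrite Rmax_right in Hxi by lra.
    assert (Hph := phi_le x1 x2 x3 xi H1 H12 ltac:(lra) ltac:(lra) H3).
    assert (Hw : 0 <= 2 * (xi - x1) / xi ^ 2).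
    { apply Rle_mult_inv_pos. lra. apply pow_lt. lra. }
    set (w := 2 * (xi - x1) / xi ^ 2) in *.
    set (p := xi ^ 2 + / (x1 * xi) - M).
    assert (Hp : p <= 0) by (unfold p, M; lra).
    assert (Hwp : w * p <= 0) by nra.
    assert (Hd : w * p * (x3 - z) <= 0) by nra.
    assert (HL : ln x3 - ln z = C - (z - x1) / z) by (unfold f in Hfzz; lra).
    unfold Psi in Hmvt. rewrite HL in Hmvt.
    replace (ln x3 - ln x3) with 0 in Hmvt by ring.
    unfold Hc. rewrite ln_div' by lra. rewrite HL.
    assert (Hid : Th x1 z + (C - (z - x1) / z + / 4 * (x3 ^ 2 - z ^ 2) - / 4 * (/ x3 ^ 2 - / z ^ 2))
                  - (Th x1 x2 + Th x2 x3)
                  = / 4 * ((2 * (x1 * z + / (x1 * z)) - (z ^ 2 + / z ^ 2))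
                           - (2 * (x1 * x3 + / (x1 * x3)) - (x3 ^ 2 + / x3 ^ 2))
                           - 2 * M * (C - (x3 - x1) / x3))).
    { unfold Th, M, C. field. repeat split; lra. }
    assert (E1 : 2 * M * ((z - x1) / z + (C - (z - x1) / z)) = 2 * M * C) by ring.
    assert (E2 : 2 * M * ((x3 - x1) / x3 + 0) = 2 * M * ((x3 - x1) / x3)) by ring.
    assert (E3 : 2 * M * (C - (x3 - x1) / x3) = 2 * M * C - 2 * M * ((x3 - x1) / x3)) by ring.
    rewrite E1, E2 in Hmvt. rewrite E3 in Hid.
    fold p in Hmvt. lra.
Qed.
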